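(* A positive integer $m$ does not occur in the sequence $(a(n))_{n\ge 0}$ if and only if $m=\lfloor \varphi^2 k+\tfrac12\rfloor$ for some integer $k\ge 1$.
   Context: $\varphi=(1+\sqrt5)/2$. Let $(F_n)_{n\ge 0}$ be the Fibonacci numbers: $F_0=0$, $F_1=1$, $F_n=F_{n-1}+F_{n-2}$ for $n\ge 2$. Define $(a(n))_{n\ge 0}$ (OEIS A105774) by $a(0)=0$, $a(1)=1$, and for $n\ge 2$, $a(n)=F_{j+1}-a(n-F_j)$, where $j\ge 2$ is the unique index with $F_j<n\le F_{j+1}$. *)

(* Defs.v *)
From Stdlib Require Import Reals Lia ZArith Arith List.
Import ListNotations.
Open Scope R_scope.

Fixpoint fib (n : nat) : nat :=
  match n with
  | O => 0%nat
  | S p => match p with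
           | O => 1%nat
           | S q => (fib p + fib q)%nat
           end
  end.

(* The unique j >= 2 with F_j < n <= F_{j+1} (for n >= 2): search upward
   from j = 2; since F_{j+1} >= j, a search bound of n suffices. *)
Fixpoint find_j_aux (fuel j n : nat) : nat :=
  match fuel with
  | O => j
  | S f => if Nat.leb n (fib (S j)) then j else find_j_aux f (S j) n
  end.
Definition find_j (n : nat) : nat := find_j_aux n 2 n.

(* Fuel-based evaluation of A105774; fuel n suffices since the argument
   strictly decreases (F_j >= 1). *)
Fixpoint a_aux (fuel n : nat) : nat :=
  match fuel with
  | O => 0%nat
  | S f =>
      match n with
      | O => 0%nat
      | S O => 1%nat
      | _ => let j := find_j n in
             (fib (S j) - a_aux f (n - fib j))%nat
      end
  end.

Definition a (n : nat) : nat := a_aux n n.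

Definition phi : R := (1 + sqrt 5) / 2.

(* floor x = the integer z with IZR z <= x < IZR z + 1 (Stdlib's up x
   satisfies x < up x <= x + 1). *)
Definition floorR (x : R) : Z := (up x - 1)%Z.

Example a_check : List.map a (List.seq 0 14) = [0;1;1;2;4;4;7;7;6;12;12;11;9;9]%nat.
Proof. vm_compute. reflexivity. Qed.

(* Main.v *)
Require Import Defs.
From Stdlib Require Import Reals ZArith Lia Lra Psatz Arith List Classical.
Section SA.
Local Open Scope nat_scope.


Lemma fib_SS n : fib (S (S n)) = fib (S n) + fib n.
Proof. reflexivity. Qed.

Lemma fib_mono_S n : fib n <= fib (S n).
Proof. destruct n as [|n]; simpl; [lia|]. destruct n; simpl; lia. Qed.

Lemma fib_mono n m : n <= m -> fib n <= fib m.
Proof. induction 1; [lia|]. pose proof (fib_mono_S m). lia. Qed.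

Lemma fib_pos n : 1 <= n -> 1 <= fib n.
Proof. intros H. pose proof (fib_mono 1 n H). simpl in *. lia. Qed.

Lemma fib_strict n : 2 <= n -> fib n < fib (S n).
Proof. intros H. destruct n as [|[|n]]; try lia. rewrite (fib_SS (S n)). pose proof (fib_pos (S n)). lia. Qed.

Lemma fib_ge n : S n <= fib (S (S n)).
Proof.
  enough (forall m, S m <= fib (S (S m)) /\ S (S m) <= fib (S (S (S m)))) by (apply H).
  intro m; induction m as [|n' IH]; [simpl; lia|]. destruct IH as [H1 H2]. split; [lia|].
  rewrite (fib_SS (S (S n'))). lia.
Qed.

Lemma find_j_aux_spec n : forall fuel j, 2 <= j -> fib j < n -> n <= fib (S (j + fuel)) ->
  2 <= find_j_aux fuel j n /\ fib (find_j_aux fuel j n) < n /\ n <= fib (S (find_j_aux fuel j n)).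
Proof.
  induction fuel as [|f IH]; intros j Hj H1 H2; cbn [find_j_aux].
  - rewrite Nat.add_0_r in H2. repeat split; auto.
  - destruct (Nat.leb n (fib (S j))) eqn:E.
    + apply Nat.leb_le in E. repeat split; auto.
    + apply Nat.leb_gt in E. apply IH; try lia. rewrite Nat.add_succ_r in H2. simpl. exact H2.
Qed.

Lemma find_j_spec n : 2 <= n -> 2 <= find_j n /\ fib (find_j n) < n /\ n <= fib (S (find_j n)).
Proof.
  intros H. unfold find_j. apply find_j_aux_spec; try (simpl; lia).
  pose proof (fib_ge (S n)). replace (S (2 + n)) with (S (S (S n))) by lia. lia.
Qed.

Lemma a_aux_stable : forall f1 f2 n, n <= f1 -> n <= f2 -> a_aux f1 n = a_aux f2 n.
Proof.
  induction f1 as [|f1 IH]; intros f2 n H1 H2.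
  - assert (n = 0) by lia. subst. destruct f2; reflexivity.
  - destruct f2 as [|f2]; [assert (n=0) by lia; subst; reflexivity|].
    simpl. destruct n as [|[|n]]; try reflexivity.
    pose proof (find_j_spec (S (S n)) ltac:(lia)) as [Hj _].
    pose proof (fib_pos (find_j (S (S n))) ltac:(lia)).
    f_equal. apply IH; lia.
Qed.

Lemma a_rec N j : 2 <= j -> fib j < N -> N <= fib (S j) -> a N = fib (S j) - a (N - fib j).
Proof.
  intros Hj H1 H2.
  assert (HN : 2 <= N). { pose proof (fib_pos j). pose proof (fib_mono 2 j Hj). simpl in *. lia. }
  assert (Ej : find_j N = j).
  { pose proof (find_j_spec N HN) as [A [B C]].
    destruct (Nat.lt_trichotomy (find_j N) j) as [L|[L|L]]; auto.
    - assert (fib (S (find_j N)) <= fib j) by (apply fib_mono; lia). lia.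
    - assert (fib (S j) <= fib (find_j N)) by (apply fib_mono; lia). lia. }
  unfold a at 1. destruct N as [|[|N]]; try lia.
  assert (E : a_aux (S (S N)) (S (S N)) = fib (S (find_j (S (S N)))) - a_aux (S N) (S (S N) - fib (find_j (S (S N))))) by reflexivity.
  rewrite E, Ej.
  pose proof (fib_pos j). f_equal. unfold a. apply a_aux_stable; lia.
Qed.

Local Open Scope Z_scope.


Definition Zf (n : nat) : Z := Z.of_nat (fib n).
Definition Lz (n : nat) : Z := 2 * Zf (S n) - Zf n.

Lemma Zf_SS n : Zf (S (S n)) = Zf (S n) + Zf n.
Proof. unfold Zf. change (fib (S (S n))) with (fib (S n) + fib n)%nat. lia. Qed.

Lemma Zf_0 : Zf 0 = 0. Proof. reflexivity. Qed.
Lemma Zf_1 : Zf 1 = 1. Proof. reflexivity. Qed.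

Lemma cass n : Lz n * Lz n - 5 * Zf n * Zf n = 4 \/ Lz n * Lz n - 5 * Zf n * Zf n = -4.
Proof.
  assert (forall n, Zf (S n) * Zf (S n) - Zf (S n) * Zf n - Zf n * Zf n = 1 \/
                     Zf (S n) * Zf (S n) - Zf (S n) * Zf n - Zf n * Zf n = -1) as H.
  { intro n0; induction n0 as [|n1 IH]; [left; reflexivity|]. rewrite Zf_SS.
    destruct IH as [IH|IH]; [right|left]; nia. }
  unfold Lz. destruct (H n) as [E|E]; [left|right]; nia.
Qed.

Lemma Zf_3 m : Zf (S (S (S m))) = Lz m + 2 * Zf m.
Proof. unfold Lz. rewrite !Zf_SS. lia. Qed.
Lemma Lz_3 m : Lz (S (S (S m))) = 2 * Lz m + 5 * Zf m.
Proof. unfold Lz. rewrite !Zf_SS. lia. Qed.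

Lemma div5_sq c : (5 | c * c) -> (5 | c).
Proof.
  intros [q Hq]. exists (c / 5).
  assert (Hm : (c * c) mod 5 = 0) by (rewrite Hq; apply Z.mod_mul; lia).
  rewrite Z.mul_mod in Hm by lia.
  assert (0 <= c mod 5 < 5) by (apply Z.mod_pos_bound; lia).
  assert (c mod 5 = 0).
  { destruct (Z.eq_dec (c mod 5) 0); auto.
    assert (c mod 5 = 1 \/ c mod 5 = 2 \/ c mod 5 = 3 \/ c mod 5 = 4) as [E|[E|[E|E]]] by lia;
    rewrite E in Hm; simpl in Hm; discriminate. }
  pose proof (Z.div_mod c 5 ltac:(lia)). lia.
Qed.

Lemma nonsq_aux : forall (N : nat) k c, 0 <= k -> (Z.to_nat k <= N)%nat -> 1 <= k -> c * c <> 5 * k * k.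
Proof.
  induction N as [|N IH]; intros k c H0 HN Hk E; [lia|].
  assert (H5 : (5 | c)) by (apply div5_sq; exists (k*k); lia).
  destruct H5 as [c' Hc']. subst c.
  assert (H5 : (5 | k)) by (apply div5_sq; exists (c' * c'); nia).
  destruct H5 as [k' Hk']. subst k.
  apply (IH k' c'); try lia; nia.
Qed.

Lemma nonsq k c : 1 <= k -> c * c <> 5 * k * k.
Proof. intros. apply (nonsq_aux (Z.to_nat k)); lia. Qed.

Lemma pell_aux : forall (N : nat) k c, 0 <= k -> (Z.to_nat k <= N)%nat -> 0 <= c ->
  (c * c - 5 * k * k = 1 \/ c * c - 5 * k * k = -1) ->
  exists m, 2 * c = Lz m /\ 2 * k = Zf m.
Proof.
  induction N as [|N IH]; intros k c H0 HN Hc E.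
  - assert (k = 0) by lia. subst. exists 0%nat. split; [|reflexivity].
    assert (c = 1) by nia. subst. reflexivity.
  - destruct (Z.eq_dec k 0) as [Hk|Hk].
    + subst. exists 0%nat. split; [|reflexivity]. assert (c = 1) by nia. subst. reflexivity.
    + assert (2 * k <= c) by nia.
      assert (c < 3 * k) by nia.
      assert (2 * c <= 5 * k) by nia.
      destruct (IH (c - 2 * k) (5 * k - 2 * c)) as [m [Hm1 Hm2]]; try lia.
      exists (S (S (S m))). rewrite Lz_3, Zf_3. lia.
Qed.

Lemma pell k c : 0 <= k -> 0 <= c -> (c * c - 5 * k * k = 1 \/ c * c - 5 * k * k = -1) ->
  exists m, 2 * c = Lz m /\ 2 * k = Zf m.
Proof. intros. apply (pell_aux (Z.to_nat k)); lia. Qed.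

Local Open Scope R_scope.
Definition t : R := sqrt 5.
Definition psi : R := (1 - t) / 2.

Lemma t2 : t * t = 5.
Proof. unfold t. apply sqrt_sqrt. lra. Qed.
Lemma t_bounds : 2.2 < t < 2.3.
Proof. pose proof t2. assert (0 <= t) by (unfold t; apply sqrt_pos). nra. Qed.

Lemma phi_t : phi = (1 + t) / 2. Proof. reflexivity. Qed.
Lemma phi_sq : phi * phi = phi + 1. Proof. rewrite phi_t. pose proof t2. nra. Qed.
Lemma psi_sq : psi * psi = psi + 1. Proof. unfold psi. pose proof t2. nra. Qed.
Lemma phi_psi : phi * psi = -1. Proof. rewrite phi_t. unfold psi. pose proof t2. nra. Qed.

Lemma binet n : t * IZR (Zf n) = phi ^ n - psi ^ n /\ t * IZR (Zf (S n)) = phi ^ (S n) - psi ^ (S n).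
Proof.
  induction n as [|n [IH1 IH2]].
  - unfold Zf; simpl. rewrite phi_t; unfold psi. lra.
  - split; [exact IH2|]. rewrite Zf_SS, plus_IZR.
    replace (phi ^ S (S n)) with (phi ^ n * (phi * phi)) by (simpl; ring).
    replace (psi ^ S (S n)) with (psi ^ n * (psi * psi)) by (simpl; ring).
    rewrite phi_sq, psi_sq. simpl in *. nra.
Qed.

Lemma binetF n : t * IZR (Zf n) = phi ^ n - psi ^ n.
Proof. apply binet. Qed.

Lemma binetL n : IZR (Lz n) = phi ^ n + psi ^ n.
Proof.
  unfold Lz. rewrite minus_IZR, mult_IZR.
  pose proof (binetF n). pose proof (binetF (S n)). pose proof t2. pose proof t_bounds.
  apply (Rmult_eq_reg_l t); [|lra].
  simpl pow in *. rewrite Rmult_minus_distr_l, <- Rmult_assoc, (Rmult_comm t 2), Rmult_assoc.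
  rewrite H, H0. rewrite phi_t. unfold psi. nra.
Qed.

End SA.
Section SK.
Local Open Scope R_scope.

Lemma pow_le1 x n : 0 <= x <= 1 -> x ^ n <= 1.
Proof. intros H. pose proof (pow_incr x 1 n H). rewrite pow1 in H0. exact H0. Qed.

Lemma Rabs_le_between x b : Rabs x <= b -> -b <= x <= b.
Proof. intros H. pose proof (Rabs_Ropp x); pose proof (Rle_abs (-x)). pose proof (Rle_abs x). lra. Qed.

Lemma abs_psi : Rabs psi = (t - 1) / 2.
Proof. unfold psi. pose proof t_bounds. rewrite Rabs_left by lra. lra. Qed.

Lemma abs_psi_pow_le n : (1 <= n)%nat -> Rabs (psi ^ n) <= Rabs psi.
Proof.
  intros H. destruct n as [|n]; [lia|]. simpl. rewrite Rabs_mult.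
  rewrite <- RPow_abs. pose proof (pow_le1 (Rabs psi) n).
  rewrite abs_psi in *. pose proof t_bounds.
  assert ( ((t-1)/2) ^ n <= 1) by (apply H0; lra).
  assert (0 <= ((t-1)/2)^n) by (apply pow_le; lra). nra.
Qed.

Lemma phi_psi_pow n : Rabs (psi ^ n) * phi ^ n = 1.
Proof.
  assert (0 < phi) by (rewrite phi_t; pose proof t_bounds; lra).
  rewrite <- (Rabs_right (phi ^ n)) by (apply Rle_ge, pow_le; lra).
  rewrite <- Rabs_mult, <- Rpow_mult_distr, Rmult_comm, phi_psi. apply pow_1_abs.
Qed.

Lemma one_minus_2psi d : (1 <= d)%nat -> 0 < 1 - 2 * psi ^ d.
Proof.
  intros H. pose proof t_bounds. destruct d as [|[|e]]; [lia| |].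
  - simpl. unfold psi. lra.
  - replace (psi ^ S (S e)) with ((psi * psi) * psi ^ e) by (simpl; ring).
    rewrite psi_sq. 
    assert (Rabs (psi ^ e) <= 1).
    { destruct e. simpl. rewrite Rabs_R1. lra. pose proof (abs_psi_pow_le (S e) ltac:(lia)). rewrite abs_psi in H1. lra. }
    apply Rabs_le_between in H1 as [H1 H2]. unfold psi in *. nra.
Qed.

Lemma key q k c : (3 <= q)%nat -> (1 <= k)%Z -> (k <= Zf q)%Z -> (0 <= c)%Z ->
  IZR c < t * IZR k + 1 -> t * IZR k - 1 < IZR c ->
  let d := t * IZR k - IZR c in d * (d + 2 * psi ^ (q + 2)) > 0.
Proof.
  intros Hq Hk HkF Hc H1 H2 d.
  pose proof t_bounds as Tb. pose proof t2 as T2.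
  set (N := (5 * k * k - c * c)%Z).
  set (g := t * IZR k + IZR c).
  assert (HN : IZR N = d * g).
  { unfold N, d, g. rewrite minus_IZR, !mult_IZR. nra. }
  assert (HN0 : N <> 0%Z) by (unfold N; pose proof (nonsq k c Hk); lia).
  assert (Hk' : 1 <= IZR k) by (apply IZR_le; lia).
  assert (Hc' : 0 <= IZR c) by (apply IZR_le; lia).
  destruct (Z_le_gt_dec 2 (Z.abs N)) as [Hbig|Hsmall].
  -
    assert (Hg : g < phi ^ (q + 2)).
    { assert (HF := binetF q).
      assert (IZR k <= IZR (Zf q)) by (apply IZR_le; lia).
      assert (Rabs (psi ^ q) <= Rabs psi) by (apply abs_psi_pow_le; lia).
      rewrite abs_psi in H0. apply Rabs_le_between in H0.
      assert (phi ^ 3 <= phi ^ q) by (apply Rle_pow; [rewrite phi_t; lra | lia]).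
      replace (phi ^ 3) with (phi * (phi * phi)) in H3 by (simpl; ring).
      rewrite phi_sq in H3.
      replace (phi ^ (q + 2)) with (phi ^ q * (phi * phi)) by (rewrite pow_add; simpl; ring).
      rewrite phi_sq. unfold g. rewrite phi_t in *. nra. }
    assert (Habs : 2 <= Rabs d * g).
    { assert (g > 0) by (unfold g; nra).
      rewrite <- (Rabs_right g) by lra. rewrite <- Rabs_mult, <- HN, <- abs_IZR.
      apply IZR_le. lia. }
    pose proof (phi_psi_pow (q + 2)) as Hpp.
    set (b := Rabs (psi ^ (q+2))) in *.
    assert (Hg0 : 0 < g) by (unfold g; nra).
    assert (Hb0 : 0 <= b) by apply Rabs_pos.
    assert (Hgb : g * b < 1) by nra.
    assert (Hdb : Rabs d > 2 * b) by nra.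
    assert (E1 : - (Rabs d * b) <= d * psi ^ (q+2)).
    { unfold b. rewrite <- Rabs_mult. pose proof (Rabs_Ropp (d * psi ^ (q+2))); pose proof (Rle_abs (-(d * psi ^ (q+2)))). lra. }
    assert (E2 : d * d = Rabs d * Rabs d).
    { rewrite <- Rabs_mult. rewrite Rabs_right; [reflexivity|]. apply Rle_ge. nra. }
    nra.
  -
    destruct (pell k c ltac:(lia) Hc ltac:(unfold N in *; lia)) as [m [Hm1 Hm2]].
    assert (Hd : d = - psi ^ m).
    { unfold d. pose proof (binetF m) as BF. pose proof (binetL m) as BL.
      apply (f_equal IZR) in Hm1. apply (f_equal IZR) in Hm2. rewrite mult_IZR in Hm1, Hm2.
      assert (E3 : IZR k = IZR (Zf m) / 2) by lra. assert (E4 : IZR c = IZR (Lz m) / 2) by lra.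
      rewrite E3, E4. replace (t * (IZR (Zf m) / 2)) with ((t * IZR (Zf m)) / 2) by field.
      lra. }
    assert (Hmq : (m < q + 2)%nat).
    { destruct (Nat.lt_ge_cases m (q + 2)) as [L|L]; auto.
      pose proof (fib_mono _ _ L). pose proof (fib_strict q ltac:(lia)).
      pose proof (fib_SS q). replace (q + 2)%nat with (S (S q)) in * by lia.
      unfold Zf in *. lia. }
    replace (q + 2)%nat with (m + (q + 2 - m))%nat by lia.
    rewrite pow_add, Hd.
    pose proof (one_minus_2psi (q + 2 - m) ltac:(lia)).
    assert (psi ^ m <> 0) by (apply pow_nonzero; unfold psi; lra).
    assert (0 < psi ^ m * psi ^ m) by (apply Rsqr_pos_lt; auto).
    nra.
Qed.

End SK.
Section SC.
Local Open Scope Z_scope.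

Definition sq (k : Z) : Z := Z.sqrt (5 * k * k).
Definition rr (k : Z) : Z := (3 * k + 1 + sq k) / 2.

Lemma sq_spec k : sq k * sq k <= 5 * k * k < (sq k + 1) * (sq k + 1) /\ 0 <= sq k.
Proof.
  unfold sq. destruct (Z.sqrt_spec (5 * k * k) ltac:(nia)) as [A B].
  pose proof (Z.sqrt_nonneg (5 * k * k)). rewrite <- Z.add_1_r in B. lia.
Qed.

Lemma sq_unique k v : 0 <= v -> v * v <= 5 * k * k < (v + 1) * (v + 1) -> sq k = v.
Proof. intros. unfold sq. apply Z.sqrt_unique. rewrite <- Z.add_1_r. lia. Qed.

Lemma sq_mono k k' : 0 <= k <= k' -> sq k <= sq k'.
Proof. intros. unfold sq. apply Z.sqrt_le_mono. nia. Qed.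

Lemma rr_mono k k' : 0 <= k < k' -> rr k < rr k'.
Proof.
  intros H. pose proof (sq_mono k k' ltac:(lia)). unfold rr.
  Z.div_mod_to_equations. lia.
Qed.

Lemma Lz_ge3 n : (2 <= n)%nat -> 3 <= Lz n.
Proof.
  intros H. destruct n as [|[|p]]; try lia. unfold Lz.
  rewrite (Zf_SS (S p)).
  pose proof (fib_pos (S p) ltac:(lia)). pose proof (fib_pos (S (S p)) ltac:(lia)).
  unfold Zf in *. lia.
Qed.

Lemma rr_fib n : (2 <= n)%nat -> rr (Zf n) = Zf (S (S n)).
Proof.
  intros H. pose proof (Lz_ge3 n H). pose proof (cass n) as C.
  assert (HL : 3 * Zf n + Lz n = 2 * Zf (S (S n))) by (unfold Lz; rewrite Zf_SS; lia).
  unfold rr. destruct C as [C|C].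
  - rewrite (sq_unique (Zf n) (Lz n - 1)) by nia.
    replace (3 * Zf n + 1 + (Lz n - 1)) with (Zf (S (S n)) * 2) by lia.
    apply Z.div_mul. lia.
  - rewrite (sq_unique (Zf n) (Lz n)) by nia.
    replace (3 * Zf n + 1 + Lz n) with (1 + Zf (S (S n)) * 2) by lia.
    rewrite Z.div_add by lia. reflexivity.
Qed.

Lemma core q k : (3 <= q)%nat -> 1 <= k <= Zf q -> sq (Zf (q + 2) - k) = Lz (q + 2) - 1 - sq k.
Proof.
  intros Hq Hk.
  destruct (sq_spec k) as [[S1 S2] S3]. set (p := sq k) in *.
  assert (S1' : p * p < 5 * k * k) by (pose proof (nonsq k p ltac:(lia)); lia).
  pose proof (fib_strict q ltac:(lia)). pose proof (fib_SS q).
  replace (q + 2)%nat with (S (S q)) by lia.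
  assert (HFk : Zf q < Zf (S (S q))) by (unfold Zf in *; pose proof (fib_pos q ltac:(lia)); lia).
  pose proof t_bounds as Tb. pose proof t2 as T2.
  assert (HK : (1 <= IZR k)%R) by (apply IZR_le; lia).
  assert (HP0 : (0 <= IZR p)%R) by (apply IZR_le; lia).
  assert (TK : ((t * IZR k) * (t * IZR k) = 5 * IZR k * IZR k)%R) by (rewrite <- T2; ring).
  assert (TK0 : (0 < t * IZR k)%R) by nra.
  assert (HP1 : (IZR p < t * IZR k)%R).
  { apply IZR_lt in S1'. rewrite !mult_IZR in S1'.
    destruct (Rlt_or_le (IZR p) (t * IZR k)) as [?|Hc]; auto.
    assert (IZR p * IZR p >= (t * IZR k) * (t * IZR k))%R by (apply Rle_ge, Rmult_le_compat; lra). nra. }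
  assert (HP2 : (t * IZR k < IZR p + 1)%R).
  { apply IZR_lt in S2. rewrite !mult_IZR, plus_IZR in S2.
    destruct (Rlt_or_le (t * IZR k) (IZR p + 1)) as [?|Hc]; auto.
    assert ((IZR p + 1) * (IZR p + 1) <= (t * IZR k) * (t * IZR k))%R by (apply Rmult_le_compat; lra). nra. }
  pose proof (key q k p Hq ltac:(lia) ltac:(lia) S3 ltac:(lra) ltac:(lra)) as K1.
  pose proof (key q k (p + 1) Hq ltac:(lia) ltac:(lia) ltac:(lia)
                ltac:(rewrite plus_IZR; lra) ltac:(rewrite plus_IZR; lra)) as K2.
  cbv zeta in K1, K2. rewrite plus_IZR in K2.
  replace (q + 2)%nat with (S (S q)) in K1, K2 by lia.
  set (e := (psi ^ S (S q))%R) in *.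
  assert (E1 : (t * IZR k - IZR p + 2 * e > 0)%R) by nra.
  assert (E2 : (t * IZR k - IZR p - 1 + 2 * e < 0)%R) by nra.
  pose proof (binetF (S (S q))) as BF. pose proof (binetL (S (S q))) as BL. fold e in BF, BL.
  set (F := Zf (S (S q))) in *. set (L := Lz (S (S q))) in *.
  set (y := (t * (IZR F - IZR k))%R).
  assert (Hy : (y = IZR L - 2 * e - t * IZR k)%R) by (unfold y; lra).
  assert (HFk' : (IZR k < IZR F)%R) by (apply IZR_lt; lia).
  assert (Hy0 : (0 < y)%R) by (unfold y; nra).
  assert (HLp : 1 <= L - p).
  { assert (0 < L - p); [|lia]. apply lt_IZR. rewrite minus_IZR. lra. }
  apply sq_unique; [lia|].
  assert (Y2 : (y * y = 5 * (IZR F - IZR k) * (IZR F - IZR k))%R).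
  { unfold y. transitivity ((t * t) * (IZR F - IZR k) * (IZR F - IZR k))%R; [ring | rewrite T2; ring]. }
  assert (HL1 : (0 <= IZR L - 1 - IZR p)%R) by (apply IZR_le in HLp; rewrite minus_IZR in HLp; lra).
  split.
  - apply le_IZR. rewrite !mult_IZR, !minus_IZR. nra.
  - apply lt_IZR. rewrite !mult_IZR, !plus_IZR, !minus_IZR. nra.
Qed.

Lemma Zf_add2 n : Zf (n + 2) = Zf (n + 1) + Zf n.
Proof. replace (n + 2)%nat with (S (S n)) by lia. replace (n + 1)%nat with (S n) by lia. apply Zf_SS. Qed.

Lemma rr_fib' n : (2 <= n)%nat -> rr (Zf n) = Zf (n + 2).
Proof. intros H. rewrite rr_fib by lia. f_equal. lia. Qed.

Lemma r_core q k : (2 <= q)%nat -> 1 <= k <= Zf q -> rr (Zf (q + 2) - k) + rr k = Zf (q + 4).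
Proof.
  intros Hq Hk. destruct (Nat.eq_dec q 2) as [->|Hq3].
  - assert (k = 1) by (simpl in Hk; unfold Zf in Hk; simpl in Hk; lia). subst. vm_compute. reflexivity.
  - pose proof (core q k ltac:(lia) Hk) as C. unfold rr at 1. rewrite C.
    assert (H3 : 3 * Zf (q + 2) + Lz (q + 2) = 2 * Zf (q + 4)).
    { unfold Lz. replace (S (q + 2)) with (q + 3)%nat by lia.
      pose proof (Zf_add2 (q + 2)) as A4. replace (q + 2 + 2)%nat with (q + 4)%nat in A4 by lia.
      replace (q + 2 + 1)%nat with (q + 3)%nat in A4 by lia.
      lia. }
    unfold rr. Z.div_mod_to_equations. lia.
Qed.

Definition beta (x : Z) : Prop := exists k, 1 <= k /\ x = rr k.

Lemma Zf_pos n : (1 <= n)%nat -> 1 <= Zf n.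
Proof. intros. pose proof (fib_pos n H). unfold Zf. lia. Qed.

Lemma sym q x : (2 <= q)%nat -> Zf (q + 3) <= x < Zf (q + 4) -> (beta x <-> beta (Zf (q + 4) - x)).
Proof.
  intros Hq Hx.
  pose proof (rr_fib' (q + 1) ltac:(lia)) as R1. replace (q + 1 + 2)%nat with (q + 3)%nat in R1 by lia.
  pose proof (rr_fib' (q + 2) ltac:(lia)) as R2. replace (q + 2 + 2)%nat with (q + 4)%nat in R2 by lia.
  pose proof (rr_fib' q ltac:(lia)) as R0.
  pose proof (Zf_add2 q) as A2. pose proof (Zf_pos q ltac:(lia)). pose proof (Zf_pos (q+1) ltac:(lia)).
  pose proof (Zf_add2 (q + 2)) as A4. replace (q + 2 + 2)%nat with (q + 4)%nat in A4 by lia.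
  replace (q + 2 + 1)%nat with (q + 3)%nat in A4 by lia.
  pose proof (Zf_add2 (q + 1)) as A3. replace (q + 1 + 2)%nat with (q + 3)%nat in A3 by lia.
  replace (q + 1 + 1)%nat with (q + 2)%nat in A3 by lia.
  split.
  - intros [k [Hk ->]].
    assert (Zf (q + 1) <= k).
    { destruct (Z_lt_le_dec k (Zf (q + 1))) as [L|L]; auto.
      pose proof (rr_mono k (Zf (q+1)) ltac:(lia)). lia. }
    assert (k < Zf (q + 2)).
    { destruct (Z_lt_le_dec k (Zf (q + 2))) as [L|L]; auto.
      destruct (Z.eq_dec k (Zf (q + 2))) as [E|E]; [rewrite E in Hx; lia|].
      pose proof (rr_mono (Zf (q+2)) k ltac:(lia)). lia. }
    exists (Zf (q + 2) - k). split; [lia|].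
    pose proof (r_core q (Zf (q + 2) - k) Hq ltac:(lia)).
    replace (Zf (q + 2) - (Zf (q + 2) - k)) with k in H3 by lia. lia.
  - intros [k' [Hk' E]].
    assert (k' <= Zf q).
    { destruct (Z_le_gt_dec k' (Zf q)) as [L|L]; auto.
      pose proof (rr_mono (Zf q) k' ltac:(lia)). lia. }
    exists (Zf (q + 2) - k'). split; [lia|].
    pose proof (r_core q k' Hq ltac:(lia)). lia.
Qed.

Lemma beta_fib n : (2 <= n)%nat -> beta (Zf (n + 2)).
Proof. intros H. exists (Zf n). split; [apply Zf_pos; lia|]. symmetry. apply rr_fib'. auto. Qed.

Lemma floor_rr k : 0 <= k -> floorR (phi ^ 2 * IZR k + 1 / 2) = rr k.
Proof.
  intros Hk. unfold floorR.
  destruct (sq_spec k) as [[S1 S2] S3]. set (p := sq k) in *.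
  pose proof t_bounds as Tb. pose proof t2 as T2.
  assert (HK : (0 <= IZR k)%R) by (apply IZR_le; lia).
  assert (HP0 : (0 <= IZR p)%R) by (apply IZR_le; lia).
  assert (TK : ((t * IZR k) * (t * IZR k) = 5 * IZR k * IZR k)%R) by (rewrite <- T2; ring).
  assert (TK0 : (0 <= t * IZR k)%R) by nra.
  assert (HP1 : (IZR p <= t * IZR k)%R).
  { apply IZR_le in S1. rewrite !mult_IZR in S1.
    destruct (Rle_or_lt (IZR p) (t * IZR k)) as [?|Hc]; auto.
    assert ((IZR p - t * IZR k) * (IZR p + t * IZR k) > 0)%R by (apply Rmult_gt_0_compat; lra). nra. }
  assert (HP2 : (t * IZR k < IZR p + 1)%R).
  { apply IZR_lt in S2. rewrite !mult_IZR, plus_IZR in S2.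
    destruct (Rlt_or_le (t * IZR k) (IZR p + 1)) as [?|Hc]; auto.
    assert ((IZR p + 1) * (IZR p + 1) <= (t * IZR k) * (t * IZR k))%R by (apply Rmult_le_compat; lra). nra. }
  assert (Hphi : (phi ^ 2 = (3 + t) / 2)%R) by (rewrite phi_t; simpl; nra).
  rewrite Hphi.
  set (X := 3 * k + 1 + p).
  assert (HX := Z.div_mod X 2 ltac:(lia)). assert (HX2 := Z.mod_pos_bound X 2 ltac:(lia)).
  unfold rr. fold p. fold X.
  set (r := X / 2) in *. set (e := X mod 2) in *.
  assert (HXr : (IZR X = 2 * IZR r + IZR e)%R) by (rewrite HX at 1; rewrite plus_IZR, mult_IZR; reflexivity).
  assert (HXd : (IZR X = 3 * IZR k + 1 + IZR p)%R) by (unfold X; rewrite !plus_IZR, mult_IZR; reflexivity).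
  assert (He : (0 <= IZR e <= 1)%R) by (split; apply IZR_le; lia).
  rewrite <- (tech_up _ (r + 1)).
  - lia.
  - rewrite plus_IZR. nra.
  - rewrite plus_IZR. nra.
Qed.

End SC.
Section SM.

Definition inT (n m : nat) : Prop := exists i, (1 <= i <= fib n)%nat /\ a i = m.
Definition PT (n : nat) : Prop := forall m, inT n m <-> ((1 <= m <= fib n)%nat /\ ~ beta (Z.of_nat m)).

Lemma beta_small x : beta x -> x = 3%Z \/ x = 5%Z \/ (5 < x)%Z.
Proof.
  intros [k [Hk ->]].
  destruct (Z.eq_dec k 1) as [->|H1]; [left; reflexivity|].
  destruct (Z.eq_dec k 2) as [->|H2]; [right; left; reflexivity|].
  right; right. pose proof (rr_mono 2 k ltac:(lia)). change (rr 2) with 5%Z in H. lia.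
Qed.

Lemma beta3 : beta 3. Proof. exists 1%Z. split; [lia|reflexivity]. Qed.
Lemma beta5 : beta 5. Proof. exists 2%Z. split; [lia|reflexivity]. Qed.

Lemma PT4 : PT 4.
Proof.
  intros m. unfold inT. change (fib 4) with 3%nat. split.
  - intros [i [Hi <-]].
    assert (Hc : (i = 1 \/ i = 2 \/ i = 3)%nat) by lia; destruct Hc as [->|[->| ->]]; vm_compute a;
      (split; [lia|]); intros Hb; apply beta_small in Hb; simpl in Hb; lia.
  - intros [Hm Hb].
    assert (Hc : (m = 1 \/ m = 2 \/ m = 3)%nat) by lia; destruct Hc as [->|[->| ->]].
    + exists 1%nat. split; [lia|reflexivity].
    + exists 3%nat. split; [lia|reflexivity].
    + exfalso. apply Hb. exact beta3.
Qed.

Lemma PT5 : PT 5.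
Proof.
  intros m. unfold inT. change (fib 5) with 5%nat. split.
  - intros [i [Hi <-]].
    assert (Hc : (i = 1 \/ i = 2 \/ i = 3 \/ i = 4 \/ i = 5)%nat) by lia; destruct Hc as [->|[->|[->|[->| ->]]]]; vm_compute a;
      (split; [lia|]); intros Hb; apply beta_small in Hb; simpl in Hb; lia.
  - intros [Hm Hb].
    assert (Hc : (m = 1 \/ m = 2 \/ m = 3 \/ m = 4 \/ m = 5)%nat) by lia; destruct Hc as [->|[->|[->|[->| ->]]]].
    + exists 1%nat. split; [lia|reflexivity].
    + exists 3%nat. split; [lia|reflexivity].
    + exfalso. apply Hb. exact beta3.
    + exists 4%nat. split; [lia|reflexivity].
    + exfalso. apply Hb. exact beta5.
Qed.

Lemma fib_add2 n : fib (n + 2) = (fib (n + 1) + fib n)%nat.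
Proof. replace (n + 2)%nat with (S (S n)) by lia. replace (n + 1)%nat with (S n) by lia. reflexivity. Qed.

Lemma PT_step q : (2 <= q)%nat -> PT (q + 2) -> PT (q + 3) -> PT (q + 4).
Proof.
  intros Hq P2 P3 m.
  pose proof (fib_add2 (q + 2)) as A4. replace (q + 2 + 2)%nat with (q + 4)%nat in A4 by lia.
  replace (q + 2 + 1)%nat with (q + 3)%nat in A4 by lia.
  pose proof (fib_pos (q + 2) ltac:(lia)). pose proof (fib_pos (q + 3) ltac:(lia)).
  assert (Hrec : forall i, (fib (q + 3) < i <= fib (q + 4))%nat -> a i = (fib (q + 4) - a (i - fib (q + 3)))%nat).
  { intros i Hi. replace (q + 4)%nat with (S (q + 3)) in * by lia. apply a_rec; lia. }
  assert (Hsym := sym q). unfold Zf in Hsym.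
  assert (Hbf := beta_fib (q + 2) ltac:(lia)). unfold Zf in Hbf. replace (q + 2 + 2)%nat with (q + 4)%nat in Hbf by lia.
  split.
  - intros [i [Hi Ha]].
    destruct (Nat.le_gt_cases i (fib (q + 3))) as [L|L].
    + destruct (proj1 (P3 m) (ex_intro _ i (conj (conj (proj1 Hi) L) Ha))) as [H1 H2]. split; [lia|exact H2].
    + rewrite Hrec in Ha by lia.
      set (t' := a (i - fib (q + 3))) in *.
      assert (HT : inT (q + 2) t') by (exists (i - fib (q + 3))%nat; split; [lia|reflexivity]).
      destruct (proj1 (P2 t') HT) as [H1 H2].
      split; [lia|]. intros Hb. apply H2.
      assert (E : Z.of_nat t' = (Z.of_nat (fib (q + 4)) - Z.of_nat m)%Z) by lia. rewrite E.
      apply (Hsym (Z.of_nat m) Hq); [lia|exact Hb].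
  - intros [Hm Hb].
    destruct (Nat.le_gt_cases m (fib (q + 3))) as [L|L].
    + destruct (proj2 (P3 m) (conj (conj (proj1 Hm) L) Hb)) as [i [Hi Ha]].
      exists i. split; [lia|exact Ha].
    + assert (Hne : m <> fib (q + 4)) by (intros E; apply Hb; rewrite E; exact Hbf).
      set (t' := (fib (q + 4) - m)%nat).
      assert (Ht : ~ beta (Z.of_nat t')).
      { intros Htb. apply Hb. apply (Hsym (Z.of_nat m) Hq); [lia|].
        replace (Z.of_nat (fib (q + 4)) - Z.of_nat m)%Z with (Z.of_nat t') by (unfold t'; lia). exact Htb. }
      assert (HT : (1 <= t' <= fib (q + 2))%nat) by (unfold t'; lia).
      destruct (proj2 (P2 t') (conj HT Ht)) as [i' [Hi' Ha']].
      exists (i' + fib (q + 3))%nat. split; [lia|].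
      rewrite Hrec by lia. replace (i' + fib (q + 3) - fib (q + 3))%nat with i' by lia.
      rewrite Ha'. unfold t'. lia.
Qed.

Lemma PT_all d : PT (d + 4) /\ PT (d + 5).
Proof.
  induction d as [|d [IH1 IH2]].
  - split; [exact PT4 | exact PT5].
  - split; [replace (S d + 4)%nat with (d + 5)%nat by lia; exact IH2|].
    replace (S d + 5)%nat with ((d + 2) + 4)%nat by lia.
    apply PT_step; [lia| |].
    + replace (d + 2 + 2)%nat with (d + 4)%nat by lia. exact IH1.
    + replace (d + 2 + 3)%nat with (d + 5)%nat by lia. exact IH2.
Qed.


End SM.

Open Scope R_scope.
Theorem proposition5 (m : nat) (hm : (1 <= m)%nat) :
  (forall n : nat, a n <> m) <->
  (exists k : Z, (1 <= k)%Z /\ Z.of_nat m = floorR (phi ^ 2 * IZR k + 1 / 2)).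
Proof.
  assert (Hb : (exists k : Z, (1 <= k)%Z /\ Z.of_nat m = floorR (phi ^ 2 * IZR k + 1 / 2)) <-> beta (Z.of_nat m)).
  { split; intros [k [Hk E]]; exists k; split; auto; rewrite floor_rr in * by lia; auto. }
  rewrite Hb. split.
  - intros H. destruct (classic (beta (Z.of_nat m))) as [B|B]; auto. exfalso.
    destruct (PT_all m) as [P _].
    pose proof (fib_ge (S (S m))). pose proof (fib_mono (S (S (S (S m)))) (m + 4) ltac:(lia)).
    assert (HT : (1 <= m <= fib (m + 4))%nat) by lia.
    destruct (proj2 (P m) (conj HT B)) as [i [_ Ha]]. exact (H i Ha).
  - intros B n Ha. destruct (PT_all n) as [P _].
    assert (n <> 0%nat) by (intros ->; vm_compute in Ha; lia).
    pose proof (fib_ge (S (S n))). pose proof (fib_mono (S (S (S (S n)))) (n + 4) ltac:(lia)).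
    assert (HT : inT (n + 4) m) by (exists n; split; [lia|exact Ha]).
    destruct (proj1 (P m) HT) as [_ NB]. exact (NB B).
Qed.
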